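(* Let $\lambda$ be a partition and $\sigma:\operatorname{dg}(\lambda)\to\mathbb{Z}_{>0}$ any filling. For every positive integer $k$, $$\sum_{\substack{u\in\operatorname{dg}(\lambda)\\ \sigma(u)=k\ne\sigma(\mathrm N(u))}} t^{\operatorname{up}(\sigma,u)}=\sum_{\substack{u\in\operatorname{dg}(\lambda)\\ \sigma(u)=k\ne\sigma(\mathrm S(u))}} t^{\operatorname{down}(\sigma,u)}$$ as polynomials in $t$.
   Context: $\operatorname{dg}(\lambda)=\{(r,i):1\le i\le\ell(\lambda),\ 1\le r\le\lambda_i\}$ (row $r$ counted from the bottom, column $i$ from the left). For a cell $u=(r,c)$: $\mathrm S(u)=(r-1,c)$ and $\mathrm N(u)=(r+1,c)$; by convention $\sigma(\mathrm S(u))=\infty$ if $r=1$ and $\sigma(\mathrm N(u))=0$ if $r=\lambda_c$. The lower arm is $\operatorname{arm}(u)=\{(r,j)\in\operatorname{dg}(\lambda):j<c\}\cup\{(r-1,j)\in\operatorname{dg}(\lambda):j>c\}$ and the upper arm is $\operatorname{uarm}(u)=\{(r+1,j)\in\operatorname{dg}(\lambda):j<c\}\cup\{(r,j)\in\operatorname{dg}(\lambda):j>c\}$. Define $\operatorname{down}(\sigma,u)=\#\{y\in\operatorname{arm}(u):\sigma(y)=\sigma(u)\}$ when $\sigma(\mathrm S(u))\ne\sigma(u)$, and $\operatorname{up}(\sigma,u)=\#\{y\in\operatorname{uarm}(u):\sigma(y)=\sigma(u)\}$ when $\sigma(\mathrm N(u))\ne\sigma(u)$ (only these cases occur in the sums).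 *)

(* Defs.v *)
From mathcomp Require Import all_boot all_order all_algebra.
Set Implicit Arguments. Unset Strict Implicit. Unset Printing Implicit Defensive.

Definition is_partition (lam : seq nat) : bool :=
  sorted geq lam && all (fun a => 0 < a) lam.

(* height of column c (1-based): lam_c *)
Definition colh (lam : seq nat) (c : nat) : nat := nth 0 lam c.-1.

(* cells are pairs (r, c): row r (from bottom), column c (from left) *)
Definition in_dg (lam : seq nat) (u : nat * nat) : bool :=
  [&& 1 <= u.2 <= size lam & 1 <= u.1 <= colh lam u.2].

Definition dg (lam : seq nat) : seq (nat * nat) :=
  flatten [seq [seq (r, c) | r <- iota 1 (colh lam c)] | c <- iota 1 (size lam)].

Definition in_arm (lam : seq nat) (u y : nat * nat) : bool :=
  in_dg lam y &&
  (((y.1 == u.1) && (y.2 < u.2)) || ((y.1 == u.1.-1) && (u.2 < y.2) && (1 < u.1))).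

Definition in_uarm (lam : seq nat) (u y : nat * nat) : bool :=
  in_dg lam y &&
  (((y.1 == u.1.+1) && (y.2 < u.2)) || ((y.1 == u.1) && (u.2 < y.2))).

Definition down (lam : seq nat) (sigma : nat * nat -> nat) (u : nat * nat) : nat :=
  count (fun y => in_arm lam u y && (sigma y == sigma u)) (dg lam).

Definition up (lam : seq nat) (sigma : nat * nat -> nat) (u : nat * nat) : nat :=
  count (fun y => in_uarm lam u y && (sigma y == sigma u)) (dg lam).

(* sigma(u) != sigma(N(u)), with the convention sigma(N(u)) = 0 when r = lam_c
   (sigma takes positive values on the diagram, so this is automatic then). *)
Definition neqN (lam : seq nat) (sigma : nat * nat -> nat) (u : nat * nat) : bool :=
  (u.1 == colh lam u.2) || (sigma (u.1.+1, u.2) != sigma u).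

(* sigma(u) != sigma(S(u)), with the convention sigma(S(u)) = infinity when r = 1. *)
Definition neqS (sigma : nat * nat -> nat) (u : nat * nat) : bool :=
  (u.1 == 1) || (sigma (u.1.-1, u.2) != sigma u).

(* Main.v *)
Require Import Defs.
From mathcomp Require Import all_boot all_order all_algebra.
From mathcomp Require Import ring zify.
Import GRing.Theory Num.Theory.

Lemma big_pred1_seq_gen (R : Type) (idx : R) (op : Monoid.com_law idx)
  (s : seq nat) (j : nat) (F : nat -> R) :
  uniq s -> \big[op/idx]_(r <- s | r == j) F r = if j \in s then F j else idx.
Proof.
elim: s => [|x s IH] /=; first by rewrite big_nil.
move=> /andP[xs us]; rewrite big_cons IH // in_cons.
case: (eqVneq x j) => [<-|ne].
  by rewrite ?eqxx /= (negbTE xs) Monoid.mulm1.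
by [] || rewrite eq_sym (negbTE ne).
Qed.

Lemma in_dg_mem lam u : u \in dg lam -> in_dg lam u.
Proof.
rewrite /dg => /flatten_mapP [c]; rewrite mem_iota => /andP[c1 c2] /mapP [r].
rewrite mem_iota => /andP[r1 r2] ->; rewrite /in_dg /= c1 r1 /=.
apply/andP; split; lia.
Qed.

Lemma colh_le lam c : colh lam c <= sumn lam.
Proof.
rewrite /colh; elim: lam c.-1 => [|a l IH] [|i] //=; first exact: leq_addr.
exact: leq_trans (IH i) (leq_addl _ _).
Qed.

Lemma row_big (R : Type) (idx : R) (op : Monoid.com_law idx) lam
  (P : pred (nat * nat)) (F : nat * nat -> R) j :
  (forall u, P u -> in_dg lam u) ->
  \big[op/idx]_(u <- dg lam | P u && (u.1 == j)) F u =
  \big[op/idx]_(c <- iota 0 (size lam).+1 | P (j, c)) F (j, c).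
Proof.
move=> HP; rewrite /dg big_flatten big_map /= big_cons.
have -> : P (j, 0) = false.
  by apply/negbTE/negP => /HP.
rewrite [RHS]big_mkcond; apply: eq_big_seq => c.
rewrite mem_iota => /andP[c1 c2]; rewrite big_map /=.
rewrite (eq_bigl (fun r => (r == j) && P (j, c))); last first.
  by move=> r /=; case: (eqVneq r j) => [->|]; rewrite ?andbT ?andbF.
rewrite -big_filter.
case Pj: (P (j, c)).
  rewrite (eq_filter (a2 := fun r => r == j)); last by move=> r; rewrite andbT.
  rewrite big_filter big_pred1_seq_gen ?iota_uniq // mem_iota.
  have := HP _ Pj; rewrite /in_dg /= => /andP[_ /andP[h1 h2]].
  by have -> : (1 <= j < 1 + colh lam c) by lia.
rewrite (eq_filter (a2 := pred0)); last by move=> r; rewrite andbF.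
by rewrite filter_pred0 big_nil.
Qed.

Lemma row_count lam (P : pred (nat * nat)) j :
  (forall u, P u -> in_dg lam u) ->
  count (fun u => P u && (u.1 == j)) (dg lam) =
  count (fun c => P (j, c)) (iota 0 (size lam).+1).
Proof.
move=> HP; rewrite -!sum1_count.
exact: row_big.
Qed.
Local Open Scope ring_scope.

Definition hh (a b : pred nat) (R : seq nat) (c : nat) : nat :=
  (count (fun c' => b c' && (c' < c)%N) R + count (fun c' => a c' && (c < c')%N) R)%N.
Definition G (n : nat) : {poly int} := \sum_(i < n) 'X^i.

Lemma G_Sl n : G n.+1 = 1 + 'X * G n.
Proof. by rewrite /G big_ord_recl expr0 big_distrr; congr (_ + _); apply: eq_bigr => i _; rewrite exprS. Qed.
Lemma G_Sr n : G n.+1 = G n + 'X^n.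
Proof. by rewrite /G big_ord_recr. Qed.

Lemma row_lemma (a b : pred nat) s m :
  \sum_(c <- iota s m | a c) 'X^(hh a b (iota s m) c) + G (count b (iota s m)) =
  \sum_(c <- iota s m | b c) 'X^(hh a b (iota s m) c) + G (count a (iota s m)).
Proof.
elim: m s => [|m IH] s; first by rewrite /= !big_nil.
rewrite [iota s m.+1]/=.
set R := iota s.+1 m.
have E1 : forall c, c \in R -> hh a b (s :: R) c = (b s + hh a b R c)%N.
  move=> c; rewrite mem_iota => /andP[c1 c2]; rewrite /hh /=.
  have -> : (c < s)%N = false by lia.
  have -> : (s < c)%N = true by lia.
  by rewrite andbT andbF; lia.
have E0 : hh a b (s :: R) s = count a R.
  rewrite /hh /= ltnn andbF !andbF /= add0n.
  rewrite (eq_in_count (a2 := pred0)); last first.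
    move=> c; rewrite mem_iota => /andP[c1 _] /=; have -> : (c < s)%N = false by (clear -c1; lia). by rewrite andbF.
  rewrite count_pred0 add0n; apply: eq_in_count => c; rewrite mem_iota => /andP[c1 _].
  have -> : (s < c)%N = true by (clear -c1; lia). by rewrite andbT.
have Sa : \sum_(c <- R | a c) 'X^(hh a b (s :: R) c) = 'X^(b s) * \sum_(c <- R | a c) 'X^(hh a b R c) :> {poly int}.
  rewrite mulr_sumr big_seq_cond [RHS]big_seq_cond; apply: eq_bigr => c /andP[cR _].
  by rewrite E1 // exprD.
have Sb : \sum_(c <- R | b c) 'X^(hh a b (s :: R) c) = 'X^(b s) * \sum_(c <- R | b c) 'X^(hh a b R c) :> {poly int}.
  rewrite mulr_sumr big_seq_cond [RHS]big_seq_cond; apply: eq_bigr => c /andP[cR _].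
  by rewrite E1 // exprD.
rewrite !big_cons Sa Sb E0 /=.
have IHs := IH s.+1; rewrite -/R in IHs.
move: IHs.
set SA := \sum_(c <- R | a c) _.
set SB := \sum_(c <- R | b c) _.
set ca := count a R; set cb := count b R.
move=> IHs.
have HSA : SA = SB + G ca - G cb by rewrite -IHs addrK.
rewrite HSA.
case: (a s); case: (b s) => /=; rewrite ?add1n ?add0n ?expr1 ?expr0 ?mul1r.
- rewrite !G_Sl; ring.
- rewrite G_Sr; ring.
- have HX : 'X^ca = 1 + 'X * G ca - G ca by rewrite -G_Sl G_Sr addrC addKr.
  rewrite G_Sl HX; ring.
- ring.
Qed.

Definition kap lam (sigma : nat * nat -> nat) k (y : nat * nat) : bool :=
  in_dg lam y && (sigma y == k).
Definition gg lam sigma k (j c : nat) : nat :=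
  hh (fun c => kap lam sigma k (j, c)) (fun c => kap lam sigma k (j.+1, c))
     (iota 0 (size lam).+1) c.

Lemma count_or (T : Type) (p1 p2 : pred T) s :
  (forall y, p1 y -> p2 y -> False) ->
  count (fun y => p1 y || p2 y) s = (count p1 s + count p2 s)%N.
Proof.
move=> H; elim: s => [|x s IH] //=; rewrite IH.
case h1: (p1 x); case h2: (p2 x) => //=; first by case: (H x).
all: lia.
Qed.

Lemma up_gg lam sigma k u : kap lam sigma k u -> up lam sigma u = gg lam sigma k u.1 u.2.
Proof.
case/andP => _ /eqP Hk; rewrite /up Hk.
rewrite (eq_count (a2 := fun y => ((kap lam sigma k y && (y.2 < u.2)%N) && (y.1 == u.1.+1))
    || ((kap lam sigma k y && (u.2 < y.2)%N) && (y.1 == u.1)))); last first.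
  move=> y; rewrite /in_uarm /kap /=.
  by move: (in_dg lam y) (sigma y == k) (y.1 == u.1.+1) (y.2 < u.2)%N (y.1 == u.1) (u.2 < y.2)%N
    => [] [] [] [] [] [].
rewrite count_or; last by move=> y /andP[_ /eqP->] /andP[_ /eqP]; lia.
rewrite !row_count //; by move=> y /andP[/andP[]].
Qed.

Lemma down_gg lam sigma k u : kap lam sigma k u -> down lam sigma u = gg lam sigma k u.1.-1 u.2.
Proof.
case/andP => Du /eqP Hk; rewrite /down Hk.
have Hy : forall y, in_dg lam y -> (0 < y.1)%N.
  by move=> y /andP[_ /andP[]].
have u1 := Hy _ Du.
rewrite (eq_count (a2 := fun y => ((kap lam sigma k y && (y.2 < u.2)%N) && (y.1 == u.1.-1.+1))
    || ((kap lam sigma k y && (u.2 < y.2)%N) && (y.1 == u.1.-1)))); last first.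
  move=> y; rewrite /in_arm /kap /= (prednK u1).
  case Dy: (in_dg lam y) => //=.
  have y1 := Hy _ Dy.
  case: u u1 {Du Hk} => [[|[|r]] c] //= _.
    have -> : (y.1 == 0) = false by lia.
    by move: (sigma y == k) (y.1 == 1%N) (y.2 < c)%N (c < y.2)%N => [] [] [] [].
  have -> : (1 < r.+2)%N by lia.
  by move: (sigma y == k) (y.1 == r.+2) (y.2 < c)%N (y.1 == r.+1) (c < y.2)%N => [] [] [] [] [].
rewrite count_or; last by move=> y /andP[_ /eqP->] /andP[_ /eqP]; lia.
rewrite !row_count //; by move=> y /andP[/andP[]].
Qed.

Lemma neqN_kap lam sigma k u : in_dg lam u -> sigma u = k ->
  neqN lam sigma u = ~~ kap lam sigma k (u.1.+1, u.2).
Proof.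
case: u => r c /andP[/andP[c1 c2] /andP[r1 r2]] /= Hk; rewrite /= in c1 c2 r1 r2.
rewrite /neqN /kap /in_dg /= c1 c2 /= Hk negb_and.
congr (_ || _); lia.
Qed.

Lemma neqS_kap lam sigma k u : in_dg lam u -> sigma u = k ->
  neqS sigma u = ~~ kap lam sigma k (u.1.-1, u.2).
Proof.
case: u => [[|[|r]] c] /andP[/andP[c1 c2] /andP[r1 r2]] //= Hk; rewrite /= in c1 c2 r1 r2.
  by rewrite /neqS /kap /in_dg /= c1 c2.
rewrite /neqS /kap /in_dg /= c1 c2 /= Hk negb_and.
have -> : (r.+1 <= colh lam c)%N by lia.
by [].
Qed.

Lemma kap0 lam sigma k c : kap lam sigma k (0, c) = false.
Proof. by rewrite /kap /in_dg /= andbF. Qed.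

Lemma kap_big lam sigma k j c : (sumn lam < j)%N -> kap lam sigma k (j, c) = false.
Proof.
move=> hj; rewrite /kap /in_dg /=; have := colh_le lam c.
case hjc: (j <= colh lam c)%N => //=; last by rewrite !andbF.
move=> h. have : False by lia. by [].
Qed.

Lemma split_rows lam (P : pred (nat * nat)) (F : nat * nat -> {poly int}) :
  (forall u, P u -> in_dg lam u) ->
  \sum_(u <- dg lam | P u) F u =
  \sum_(j < (sumn lam).+2) \sum_(u <- dg lam | P u && (u.1 == j)) F u.
Proof.
move=> HP; symmetry.
under eq_bigr => j _ do rewrite big_mkcondr.
rewrite exchange_big /=; apply: eq_bigr => u Pu.
have lt : (u.1 < (sumn lam).+2)%N.
  have := HP _ Pu; case: u {Pu} => r c /andP[_ /andP[_ h]] /=.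
  have := colh_le lam c; rewrite /= in h; lia.
rewrite (bigD1 (Ordinal lt)) //= eqxx big1 ?addr0 // => i ne.
case: eqP => // e; case/eqP: ne; apply: val_inj => /=; by rewrite e.
Qed.

Theorem lemma4p2 (lam : seq nat) (sigma : nat * nat -> nat) (k : nat) :
  is_partition lam ->
  (forall u, in_dg lam u -> (0 < sigma u)%N) ->
  (0 < k)%N ->
  \sum_(u <- dg lam | (sigma u == k) && neqN lam sigma u) 'X^(up lam sigma u)
  = \sum_(u <- dg lam | (sigma u == k) && neqS sigma u) 'X^(down lam sigma u)
    :> {poly int}.
Proof.
move=> _ _ _.
pose K := kap lam sigma k.
pose Rc := iota 0 (size lam).+1.
pose n := (sumn lam).+1.
have HK : forall u, K u -> in_dg lam u by move=> u /andP[].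
have L1 : \sum_(u <- dg lam | (sigma u == k) && neqN lam sigma u) 'X^(up lam sigma u)
   = \sum_(j < n.+1) \sum_(c <- Rc | K (val j, c) && ~~ K (j.+1, c)) 'X^(gg lam sigma k j c)
   :> {poly int}.
  rewrite (_ : \sum_(u <- dg lam | (sigma u == k) && neqN lam sigma u) 'X^(up lam sigma u)
     = \sum_(u <- dg lam | K u && ~~ K (u.1.+1, u.2)) 'X^(gg lam sigma k u.1 u.2)).
    rewrite split_rows; last by move=> u /andP[/HK].
    by apply: eq_bigr => j _; rewrite row_big //; move=> u /andP[/andP[]].
  rewrite big_seq_cond [RHS]big_seq_cond; apply: eq_big => [u|u /andP[ud /andP[Hs _]]].
    case ud: (u \in dg lam) => //=.
    have D := @in_dg_mem lam u ud.
    rewrite /K /kap D /=; case Hs: (sigma u == k) => //=.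
    by rewrite (neqN_kap lam sigma k) // (eqP Hs).
  by rewrite (up_gg lam sigma k) // /kap (@in_dg_mem lam u ud).
have L2 : \sum_(u <- dg lam | (sigma u == k) && neqS sigma u) 'X^(down lam sigma u)
   = \sum_(j < n.+1) \sum_(c <- Rc | K (val j, c) && ~~ K (j.-1, c)) 'X^(gg lam sigma k j.-1 c)
   :> {poly int}.
  rewrite (_ : \sum_(u <- dg lam | (sigma u == k) && neqS sigma u) 'X^(down lam sigma u)
     = \sum_(u <- dg lam | K u && ~~ K (u.1.-1, u.2)) 'X^(gg lam sigma k u.1.-1 u.2)).
    rewrite split_rows; last by move=> u /andP[/HK].
    by apply: eq_bigr => j _; rewrite row_big //; move=> u /andP[/andP[]].
  rewrite big_seq_cond [RHS]big_seq_cond; apply: eq_big => [u|u /andP[ud /andP[Hs _]]].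
    case ud: (u \in dg lam) => //=.
    have D := @in_dg_mem lam u ud.
    rewrite /K /kap D /=; case Hs: (sigma u == k) => //=.
    by rewrite (neqS_kap lam sigma k) // (eqP Hs).
  by rewrite (down_gg lam sigma k) // /kap (@in_dg_mem lam u ud).
rewrite L1 L2 {L1 L2}.
pose A j := \sum_(c <- Rc | K (j, c)) 'X^(gg lam sigma k j c) : {poly int}.
pose T j := \sum_(c <- Rc | K (j, c) && K (j.+1, c)) 'X^(gg lam sigma k j c) : {poly int}.
pose B j := \sum_(c <- Rc | K (j, c)) 'X^(gg lam sigma k j.-1 c) : {poly int}.
pose T' j := \sum_(c <- Rc | K (j, c) && K (j.-1, c)) 'X^(gg lam sigma k j.-1 c) : {poly int}.
have E1 : forall j : nat, \sum_(c <- Rc | K (j, c) && ~~ K (j.+1, c)) 'X^(gg lam sigma k j c) = A j - T j.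
  move=> j; rewrite /A /T [X in _ = X - _](bigID (fun c => K (j.+1, c))) /=.
  by rewrite [X in X - _]addrC addrK.
have E2 : forall j : nat, \sum_(c <- Rc | K (j, c) && ~~ K (j.-1, c)) 'X^(gg lam sigma k j.-1 c) = B j - T' j.
  move=> j; rewrite /B /T' [X in _ = X - _](bigID (fun c => K (j.-1, c))) /=.
  by rewrite [X in X - _]addrC addrK.
under eq_bigr => j _ do rewrite E1.
under [RHS]eq_bigr => j _ do rewrite E2.
rewrite !sumrB.
have Z : forall j (F : nat -> {poly int}), (sumn lam < j)%N -> \sum_(c <- Rc | K (j, c)) F c = 0.
  by move=> j F hj; rewrite big_pred0 // => c; exact: kap_big.
have Z' : forall j (F : nat -> {poly int}) (Q : pred nat), (sumn lam < j)%N -> \sum_(c <- Rc | K (j, c) && Q c) F c = 0.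
  by move=> j F Q hj; rewrite big_pred0 // => c; rewrite /K kap_big.
have Z0 : forall (F : nat -> {poly int}) (Q : pred nat), \sum_(c <- Rc | K (0, c) && Q c) F c = 0.
  by move=> F Q; rewrite big_pred0 // => c; rewrite /K kap0.
have HT : \sum_(j < n.+1) T j = \sum_(j < n.+1) T' j.
  have TZ : T n = 0 by rewrite /T (Z' n _ (fun c => K (n.+1, c))) // /n.
  have TZ' : T' 0%N = 0 by rewrite /T' (Z0 _ (fun c => K (0.-1, c))).
  rewrite [LHS]big_ord_recr /= TZ addr0 [RHS]big_ord_recl /= TZ' add0r.
  apply: eq_bigr => i _; rewrite /T /T' /=.
  by apply: eq_bigl => c; rewrite andbC.
rewrite HT; congr (_ - _).
pose cnt j := count (fun c => K (j, c)) Rc.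
have Hrow : forall j : nat, A j + G (cnt j.+1) = B j.+1 + G (cnt j).
  move=> j; exact: (row_lemma (fun c => K (j, c)) (fun c => K (j.+1, c)) 0 (size lam).+1).
have Ind : forall m, \sum_(j < m) A j + G (cnt m) = \sum_(j < m) B j.+1 + G (cnt 0).
  elim=> [|m IH]; first by rewrite !big_ord0.
  rewrite big_ord_recr [in RHS]big_ord_recr /= -addrA Hrow addrCA IH.
  by rewrite addrCA addrA.
have c0 : forall j, (sumn lam < j)%N -> cnt j = 0%N.
  move=> j hj; rewrite /cnt (eq_count (a2 := pred0)) ?count_pred0 // => c.
  by rewrite /K kap_big.
have c00 : cnt 0%N = 0%N.
  by rewrite /cnt (eq_count (a2 := pred0)) ?count_pred0 // => c; rewrite /K kap0.
have cN : cnt n.+1 = 0%N by apply: c0; rewrite /n; lia.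
have := Ind n.+1; rewrite c00 cN /G !big_ord0 !addr0 => ->.
have BZ : B n.+1 = 0 by rewrite /B Z //; rewrite /n; lia.
have BZ' : B 0%N = 0 by rewrite /B big_pred0 // => c; rewrite /K kap0.
by rewrite big_ord_recr /= BZ addr0 [RHS]big_ord_recl /= BZ' add0r.
Qed.
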